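(* Let $n\in\mathbb{N}^*$, $N\in\mathbb{N}^*$, and let $R_{a,b}(\lambda)=\lambda\, I_{a,b}+\mathbb{P}_{a,b}\in\operatorname{End}(V_a\otimes V_b)$, $V_a\cong V_b\cong\mathbb{C}^n$, where $\mathbb{P}_{a,b}$ is the permutation operator. Let $K\in\operatorname{End}(\mathbb{C}^n)$, let $\xi_1,\dots,\xi_N\in\mathbb{C}$, let $\mathcal{H}=\bigotimes_{l=1}^N V_l$ with $V_l\cong\mathbb{C}^n$, define the monodromy matrix $M^{(K)}_a(\lambda)=K_aR_{a,N}(\lambda-\xi_N)\cdots R_{a,1}(\lambda-\xi_1)$ and the transfer matrix $T^{(K)}(\lambda)=\operatorname{tr}_{V_a}M^{(K)}_a(\lambda)\in\operatorname{End}(\mathcal{H})$. Assume that $K$ is $w$-simple on $\mathbb{C}^n$. Then for almost any choice of the covector $\langle S|\in\mathcal{H}^*$ and of the parameters $(\xi_1,\dots,\xi_N)$, the set $$\langle h_1,\dots,h_N|:=\langle S|\prod_{a=1}^N\big(T^{(K)}(\xi_a)\big)^{h_a},\qquad (h_1,\dots,h_N)\in\{0,\dots,n-1\}^N,$$ is a basis of $\mathcal{H}^*$. In particular, for almost all values of $(\xi_1,\dots,\xi_N)$, one can take $\langle S|=\bigotimes_{a=1}^N\langle S,a|$ for any local covectors $\langle S,a|\in V_a^*$ such that $\{\langle S,a|K_a^h: h=0,\dots,n-1\}$ is a basis of $V_a^*$ for each $a=1,\dots,N$ (such $\langle S,a|$ exist since $K$ is $w$-simple).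
   Context: A matrix $K$ is $w$-simple if every eigenvalue of $K$ has exactly one eigenvector up to multiplication by a nonzero scalar. $K_a$ denotes $K$ acting on the auxiliary space $V_a$ (respectively on the site space $V_a$ in the last sentence), and $\operatorname{tr}_{V_a}$ is the partial trace over the auxiliary space $V_a\cong\mathbb{C}^n$. *)

(* Defs.v *)
(* (with multinomials for "almost all" = outside the zero set
   of a nonzero polynomial). *)
From HB Require Import structures.
From mathcomp Require Import all_boot all_order all_algebra.
From mathcomp Require Export mpoly.
Set Implicit Arguments. Unset Strict Implicit. Unset Printing Implicit Defensive.
Import Order.TTheory GRing.Theory Num.Theory.
Local Open Scope ring_scope.

Section Defs.
Variable C : numClosedFieldType.

Definition op (I : finType) := 'M[C]_#|I|.
Definition mkop (I : finType) (f : I -> I -> C) : op I :=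
  \matrix_(i, j) f (enum_val i) (enum_val j).
Definition ent (I : finType) (A : op I) (x y : I) : C :=
  A (enum_rank x) (enum_rank y).

Definition w_simple n (K : 'M[C]_n) : Prop :=
  forall (a : C) (v w : 'cV[C]_n), v != 0 -> K *m v = a *: v ->
    K *m w = a *: w -> exists c : C, w = c *: v.

(* Basis indices of H = V_1 (x) ... (x) V_N, V_l = C^n. *)
Definition cfg N n := {ffun 'I_N -> 'I_n}.
(* Basis indices of V_a (x) H (auxiliary space first). *)
Definition aux N n := ('I_n * cfg N n)%type.

(* Permutation operator P_{a,l} on V_a (x) H: swap the auxiliary index with
   the index of site l. *)
Definition swap_site N n (l : 'I_N) (y : aux N n) : aux N n :=
  (y.2 l, finfun (fun m => if m == l then y.1 else y.2 m)).
Definition Pperm N n (l : 'I_N) : op (aux N n) :=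
  mkop (fun x y => (x == swap_site l y)%:R).
Definition Rmat N n (l : 'I_N) (mu : C) : op (aux N n) :=
  mu%:M + Pperm n l.
Definition Kaux N n (K : 'M[C]_n) : op (aux N n) :=
  mkop (fun x y => K x.1 y.1 * (x.2 == y.2)%:R).
Definition monodromy N n (K : 'M[C]_n) (xi : 'I_N -> C) (lam : C)
  : op (aux N n) :=
  Kaux N K *m \prod_(l < N) Rmat n (rev_ord l) (lam - xi (rev_ord l)).
Definition transfer N n (K : 'M[C]_n) (xi : 'I_N -> C) (lam : C)
  : op (cfg N n) :=
  mkop (fun c c' => \sum_(i < n) ent (monodromy K xi lam) (i, c) (i, c')).

Definition hvec N n (K : 'M[C]_n) (xi : 'I_N -> C) (S : 'rV[C]_#|cfg N n|)
  (h : cfg N n) : 'rV[C]_#|cfg N n| :=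
  S *m \prod_(a < N) (transfer K xi (xi a)) ^+ (h a).

Definition is_basis (I : finType) d (f : I -> 'rV[C]_d) : bool :=
  let M := \matrix_(i < #|I|) f (enum_val i) in row_free M && row_full M.

Definition tensor_covec N n (s : 'I_N -> 'rV[C]_n) : 'rV[C]_#|cfg N n| :=
  \row_j \prod_(a < N) s a 0 ((enum_val j : cfg N n) a).

Definition join_pt d N (S : 'rV[C]_d) (xi : 'I_N -> C) : 'I_(d + N) -> C :=
  fun i => match split i with inl j => S 0 j | inr j => xi j end.
End Defs.

(* Main.v *)
Require Import Defs.
From HB Require Import structures.
From mathcomp Require Import all_boot all_order all_algebra.
From mathcomp Require Import mpoly.
From mathcomp Require Import zify.
From Stdlib Require Import FunctionalExtensionality.
Set Implicit Arguments. Unset Strict Implicit. Unset Printing Implicit Defensive.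
Import Order.TTheory GRing.Theory Num.Theory.
Local Open Scope ring_scope.

Section Ent.
Variable C : numClosedFieldType.
Variable I : finType.
Implicit Types A B : op C I.

Lemma entE (f : I -> I -> C) x y : ent (mkop f) x y = f x y.
Proof. by rewrite /ent /mkop mxE !enum_rankK. Qed.

Lemma ent_inj A B : (forall x y, ent A x y = ent B x y) -> A = B.
Proof.
move=> H; apply/matrixP => i j.
by have := H (enum_val i) (enum_val j); rewrite /ent !enum_valK.
Qed.

Lemma sum_enum (F : 'I_#|I| -> C) : \sum_(k < #|I|) F k = \sum_(z : I) F (enum_rank z).
Proof.
rewrite (reindex (@enum_rank I)) //; exists enum_val => z _; rewrite ?enum_rankK ?enum_valK //.
Qed.

Lemma ent_mul A B x y : ent (A *m B) x y = \sum_z ent A x z * ent B z y.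
Proof. by rewrite /ent mxE sum_enum. Qed.

Lemma ent_add A B x y : ent (A + B) x y = ent A x y + ent B x y.
Proof. by rewrite /ent mxE. Qed.

Lemma ent_scale c A x y : ent (c *: A) x y = c * ent A x y.
Proof. by rewrite /ent mxE. Qed.

Lemma ent_scalar c x y : ent (c%:M : op C I) x y = c * (x == y)%:R.
Proof. by rewrite /ent mxE (inj_eq enum_rank_inj) mulr_natr. Qed.

Lemma ent1 x y : ent (1 : op C I) x y = (x == y)%:R.
Proof. by rewrite -idmxE ent_scalar mul1r. Qed.

Definition rent (v : 'rV[C]_#|I|) (x : I) := v 0 (enum_rank x).

Lemma rent_inj (v w : 'rV[C]_#|I|) : (forall x, rent v x = rent w x) -> v = w.
Proof.
move=> H; apply/matrixP => i j; rewrite [i]ord1.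
by have := H (enum_val j); rewrite /rent !enum_valK.
Qed.

Lemma rent_mul (v : 'rV[C]_#|I|) A y : rent (v *m A) y = \sum_x rent v x * ent A x y.
Proof. by rewrite /rent mxE sum_enum. Qed.

Lemma rent_scale c (v : 'rV[C]_#|I|) y : rent (c *: v) y = c * rent v y.
Proof. by rewrite /rent mxE. Qed.

Lemma rent_row (f : I -> C) y : rent (\row_j f (enum_val j)) y = f y.
Proof. by rewrite /rent mxE enum_rankK. Qed.

End Ent.

Section Gen.
Variable C : numClosedFieldType.

Lemma prod_scale d (I : Type) (r : seq I) (k : I -> C) (F : I -> 'M[C]_d) :
  \prod_(i <- r) (k i *: F i) = (\prod_(i <- r) k i) *: \prod_(i <- r) F i.
Proof.
elim: r => [|i r IH]; first by rewrite !big_nil scale1r.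
by rewrite !big_cons IH -!mulmxE -scalemxAl -scalemxAr scalerA.
Qed.

Lemma exp_scale d (k : C) (F : 'M[C]_d) e : (k *: F) ^+ e = k ^+ e *: F ^+ e.
Proof.
elim: e => [|e IH]; first by rewrite !expr0 scale1r.
by rewrite !exprS IH -!mulmxE -scalemxAl -scalemxAr scalerA.
Qed.

Lemma prod_single d (I : eqType) (r : seq I) (i0 : I) (F : I -> 'M[C]_d) :
  uniq r -> (forall i, i != i0 -> F i = 1) ->
  \prod_(i <- r) F i = if i0 \in r then F i0 else 1.
Proof.
move=> + HF; elim: r => [|i r IH]; first by rewrite big_nil.
rewrite big_cons inE /= => /andP[ir ur]; rewrite IH //.
have [<-|ne] := eqVneq i i0.
  by rewrite (negPf ir) mulr1.
by rewrite HF // mul1r.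
Qed.

Lemma sum_ind (I : finType) (F : I -> C) z : \sum_y F y * (y == z)%:R = F z.
Proof.
rewrite (bigD1 z) //= eqxx mulr1 big1 ?addr0 // => y /negPf ->; by rewrite mulr0.
Qed.

End Gen.

Section Str.
Variable C : numClosedFieldType.
Variables (n N : nat) (K : 'M[C]_n).

Definition upd (c : cfg N n) (a : 'I_N) (i : 'I_n) : cfg N n :=
  finfun (fun m => if m == a then i else c m).

Definition Ksite (a : 'I_N) : op C (cfg N n) :=
  mkop (fun c c' : cfg N n => K (c a) (c' a) * (c == upd c' a (c a))%:R).

Lemma upd_a c a i : upd c a i a = i.
Proof. by rewrite /upd ffunE eqxx. Qed.

Lemma eq_upd c c' a i : (c == upd c' a i) -> c a = i.
Proof. by move/eqP ->; rewrite upd_a. Qed.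

Lemma trace_KP a :
  mkop (fun c c' => \sum_i ent (Kaux N K *m Pperm C n a) (i, c) (i, c')) = Ksite a.
Proof.
apply: ent_inj => c c'; rewrite !entE.
have E i : ent (Kaux N K *m Pperm C n a) (i, c) (i, c') = K i (c' a) * (c == upd c' a i)%:R.
  rewrite ent_mul.
  under eq_bigr => y _ do rewrite /Kaux /Pperm !entE.
  rewrite /= (eq_bigr (fun y => (K i y.1 * (c == y.2)%:R) * (y == swap_site a (i, c'))%:R)).
    by rewrite sum_ind /swap_site /= mulrC.
  by [].
under eq_bigr => i _ do rewrite E.
rewrite (bigD1 (c a)) //= big1 ?addr0 // => i ne.
case: eqP => [/eqP /eq_upd Hi|_]; last by rewrite mulr0.
by rewrite Hi eqxx in ne.
Qed.

Lemma sum_upd (G : cfg N n -> C) c' a :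
  \sum_c G c * (c == upd c' a (c a))%:R = \sum_i G (upd c' a i).
Proof.
transitivity (\sum_c \sum_i G c * (c == upd c' a i)%:R).
  apply: eq_bigr => c _; rewrite -mulr_sumr; congr (_ * _).
  rewrite (bigD1 (c a)) //= big1 ?addr0 // => i ne.
  case: eqP => [/eqP /eq_upd Hi|_] //.
  by rewrite Hi eqxx in ne.
rewrite exchange_big /=; apply: eq_bigr => i _; exact: sum_ind.
Qed.

Lemma rent_tensor (t : 'I_N -> 'rV[C]_n) c :
  rent (tensor_covec t) c = \prod_a t a 0 (c a).
Proof. by rewrite /rent /tensor_covec mxE enum_rankK. Qed.

Lemma tensor_ext (t t' : 'I_N -> 'rV[C]_n) :
  (forall a, t a = t' a) -> tensor_covec t = tensor_covec t'.
Proof.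
move=> H; apply/matrixP => i j; rewrite !mxE; apply: eq_bigr => a _; by rewrite H.
Qed.

Lemma tens_Ksite t a :
  tensor_covec t *m Ksite a = tensor_covec (fun b => if b == a then t a *m K else t b).
Proof.
apply: rent_inj => c'; rewrite rent_mul rent_tensor.
rewrite (eq_bigr (fun c : cfg N n => (\prod_b t b 0 (c b)) * ent (Ksite a) c c')); last by move=> c _; rewrite rent_tensor.
under eq_bigr => c _ do rewrite /Ksite entE mulrA.
rewrite (sum_upd (fun c : cfg N n => \prod_b t b 0 (c b) * K (c a) (c' a))).
rewrite (bigD1 a) //= eqxx mxE mulr_suml.
apply: eq_bigr => i _.
rewrite upd_a (bigD1 a) //= upd_a -!mulrA; congr (_ * _); rewrite mulrC; congr (_ * _).
apply: eq_bigr => b ne; by rewrite /upd ffunE (negPf ne).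
Qed.


Lemma tens_Ksite_exp t a k :
  tensor_covec t *m Ksite a ^+ k =
  tensor_covec (fun b => if b == a then t a *m K ^+ k else t b).
Proof.
elim: k => [|k IH].
  rewrite expr0 -idmxE mulmx1; apply: tensor_ext => b.
  by case: eqP => // ->; rewrite expr0 mulmx1.
rewrite exprSr -mulmxE mulmxA IH tens_Ksite; apply: tensor_ext => b.
case: (eqVneq b a) => [E|ne]; last by []. subst b. by rewrite eqxx exprSr -mulmxE mulmxA.

Qed.

Lemma tens_prod (h : cfg N n) (r : seq 'I_N) t :
  uniq r ->
  tensor_covec t *m \prod_(a <- r) Ksite a ^+ h a =
  tensor_covec (fun b => if b \in r then t b *m K ^+ h b else t b).
Proof.
elim: r t => [|a r IH] t.
  move=> _; rewrite big_nil -idmxE mulmx1; exact: tensor_ext.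
rewrite /= => /andP[ar ur].
rewrite big_cons -mulmxE mulmxA tens_Ksite_exp IH //; apply: tensor_ext => b.
case: (eqVneq b a) => [E|ne]; first by subst b; rewrite (negPf ar) in_cons eqxx.
by rewrite in_cons (negPf ne).
Qed.

Lemma tens_prod_all (h : cfg N n) t :
  tensor_covec t *m \prod_(a < N) Ksite a ^+ h a =
  tensor_covec (fun b => t b *m K ^+ h b).
Proof.
rewrite tens_prod ?index_enum_uniq //; apply: tensor_ext => b.
by rewrite mem_index_enum.
Qed.


Lemma prod_ind (h h' : cfg N n) : \prod_b ((h b == h' b)%:R : C) = (h == h')%:R.
Proof.
have [->|ne] := eqVneq h h'.
  by rewrite big1 // => b _; rewrite eqxx.
have [b Hb] : exists b, h b != h' b.
  apply/existsP; apply: contraR ne; rewrite negb_exists => /forallP H.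
  by apply/eqP/ffunP => b; have := H b; rewrite negbK => /eqP.
by rewrite (bigD1 b) //= (negPf Hb) mul0r.
Qed.

Lemma kron_unit (s : 'I_N -> 'rV[C]_n) :
  (forall a, is_basis (fun h : 'I_n => s a *m K ^+ h)) ->
  (\matrix_(i < #|cfg N n|) tensor_covec (fun b => s b *m K ^+ ((enum_val i : cfg N n) b)))
    \in unitmx.
Proof.
move=> Hb.
set Ma := fun a => \matrix_(i < #|'I_n|) (s a *m K ^+ enum_val i).
have HP a : Ma a *m pinvmx (Ma a) = 1%:M.
  by apply: mulmxVp; have /andP[] := Hb a.
pose V : 'M[C]_#|cfg N n| := \matrix_(i, j) \prod_b pinvmx (Ma b)
   ((enum_val i : cfg N n) b) (enum_rank ((enum_val j : cfg N n) b)).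
suff E : (\matrix_(i < #|cfg N n|) tensor_covec
      (fun b => s b *m K ^+ ((enum_val i : cfg N n) b))) *m V = 1%:M.
  by have [] := mulmx1_unit E.
apply: (@ent_inj C (cfg N n)) => h h'.
rewrite ent_mul ent_scalar mul1r -prod_ind.
rewrite (eq_bigr (fun c : cfg N n => \prod_b ((s b *m K ^+ h b) 0 (c b) * pinvmx (Ma b) (c b) (enum_rank (h' b))))); last first.
  move=> c _; rewrite /ent /tensor_covec !mxE !enum_rankK -big_split /=. by [].
rewrite /cfg -(bigA_distr_bigA (fun b j => (s b *m K ^+ h b) 0 j *
    pinvmx (Ma b) j (enum_rank (h' b)))) /=.
apply: eq_bigr => b _.
have := HP b; move/matrixP/(_ (enum_rank (h b)) (enum_rank (h' b))).
rewrite /= !mxE (inj_eq enum_rank_inj). move=> <-.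
by apply: eq_bigr => j _; rewrite /Ma mxE enum_rankK.
Qed.

End Str.

Section Mn.
Variable C : numClosedFieldType.
Variables (n N : nat) (K : 'M[C]_n).

Definition xi0 (l : 'I_N) : C := (l : nat)%:R.

Definition Fm (a l : 'I_N) (u : C) : op C (aux N n) :=
  (xi0 a - xi0 l)%:M + (if l == a then 1 else u) *: Pperm C n l.

Definition T2 (a : 'I_N) (u : C) : op C (cfg N n) :=
  mkop (fun c c' : cfg N n =>
    \sum_i ent (Kaux N K *m \prod_(l < N) Fm a (rev_ord l) u) (i, c) (i, c')).

Definition Mrows (S : 'rV[C]_#|cfg N n|) (u : C) : 'M[C]_#|cfg N n| :=
  \matrix_(i < #|cfg N n|) (S *m \prod_(a < N) T2 a u ^+ ((enum_val i : cfg N n) a)).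

Definition kap (u : C) (a : 'I_N) : C := \prod_(l < N) (if rev_ord l == a then 1 else u^-1).

Lemma Rmat_scale u a l : u != 0 ->
  Rmat n l (xi0 a / u - xi0 l / u) = (if l == a then 1 else u^-1) *: Fm a l u.
Proof.
move=> u0; rewrite /Rmat /Fm.
have [->|ne] := eqVneq l a; first by rewrite !subrr !scale1r.
rewrite scalerDr scale_scalar_mx scalerA mulVf // scale1r; congr (_%:M + _).
by rewrite -mulrBl mulrC.
Qed.

Lemma mono_scale u a : u != 0 ->
  monodromy K (fun l => xi0 l / u) (xi0 a / u) =
  kap u a *: (Kaux N K *m \prod_(l < N) Fm a (rev_ord l) u).
Proof.
move=> u0; rewrite /monodromy.
rewrite (eq_bigr (fun l => (if rev_ord l == a then 1 else u^-1) *: Fm a (rev_ord l) u)).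
  by rewrite prod_scale scalemxAr.
by move=> l _; rewrite Rmat_scale.
Qed.

Lemma transfer_scale u a : u != 0 ->
  transfer K (fun l => xi0 l / u) (xi0 a / u) = kap u a *: T2 a u.
Proof.
move=> u0; apply: ent_inj => c c'.
rewrite /transfer /T2 ent_scale !entE mono_scale // mulr_sumr.
by apply: eq_bigr => i _; rewrite ent_scale.
Qed.

Lemma hvec_scale u S h : u != 0 ->
  hvec K (fun l => xi0 l / u) S h =
  (\prod_(a < N) kap u a ^+ h a) *: (S *m \prod_(a < N) T2 a u ^+ h a).
Proof.
move=> u0; rewrite /hvec scalemxAr -prod_scale; congr (_ *m _).
by apply: eq_bigr => a _; rewrite transfer_scale // exp_scale.
Qed.

Definition hmat (xi : 'I_N -> C) (S : 'rV[C]_#|cfg N n|) : 'M[C]_#|cfg N n| :=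
  \matrix_(i < #|cfg N n|) hvec K xi S (enum_val i).

Lemma basis_hmat xi S : \det (hmat xi S) != 0 -> is_basis (hvec K xi S).
Proof.
move=> H; rewrite /is_basis -/(hmat xi S) row_free_unit row_full_unit unitmxE unitfE H //.
Qed.

Lemma hmat_scale u S : u != 0 ->
  hmat (fun l => xi0 l / u) S =
  diag_mx (\row_i \prod_(a < N) kap u a ^+ ((enum_val i : cfg N n) a)) *m Mrows S u.
Proof.
move=> u0; transitivity (\matrix_(i < #|cfg N n|) ((\prod_(a < N) kap u a ^+ ((enum_val i : cfg N n) a)) *: (S *m \prod_(a < N) T2 a u ^+ ((enum_val i : cfg N n) a)))).
  by apply/row_matrixP => i; rewrite !rowK hvec_scale.
by apply/matrixP => i j; rewrite mul_diag_mx !mxE.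

Qed.

Lemma kap_neq0 u a : u != 0 -> kap u a != 0.
Proof.
move=> u0; rewrite /kap; apply/prodf_neq0 => l _.
by case: ifP => _; rewrite ?oner_eq0 ?invr_eq0.
Qed.

Lemma det_hmat u S : u != 0 -> \det (Mrows S u) != 0 ->
  \det (hmat (fun l => xi0 l / u) S) != 0.
Proof.
move=> u0 H; rewrite hmat_scale // det_mulmx det_diag mulf_neq0 //.
apply/prodf_neq0 => i _; rewrite mxE; apply/prodf_neq0 => a _.
by rewrite expf_neq0 // kap_neq0.
Qed.


Definition kap0 (a : 'I_N) : C :=
  \prod_(l < N) (if rev_ord l == a then 1 else xi0 a - xi0 (rev_ord l)).

Lemma Fm0 a l : Fm a l 0 =
  (if l == a then 1 else xi0 a - xi0 l) *: (if l == a then Pperm C n l else 1).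
Proof.
rewrite /Fm; have [->|ne] := eqVneq l a; first by rewrite subrr raddf0 add0r !scale1r.
by rewrite scale0r addr0 -idmxE scalemx1.
Qed.

Lemma T2_0 a : T2 a 0 = kap0 a *: Ksite K a.
Proof.
have E : \prod_(l < N) Fm a (rev_ord l) 0 = kap0 a *: Pperm C n a.
  rewrite (eq_bigr (fun l => (if rev_ord l == a then 1 else xi0 a - xi0 (rev_ord l)) *:
      (if rev_ord l == a then Pperm C n (rev_ord l) else 1))); last by move=> l _; rewrite Fm0.
  rewrite prod_scale (prod_single (i0 := rev_ord a)) ?index_enum_uniq ?mem_index_enum ?rev_ordK ?eqxx //.

  move=> l ne; case: eqP => // E; case/eqP: ne; by rewrite -E rev_ordK.
rewrite -trace_KP; apply: ent_inj => c c'.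
rewrite /T2 ent_scale !entE mulr_sumr; apply: eq_bigr => i _.
by rewrite E -scalemxAr ent_scale.
Qed.

Lemma kap0_neq0 a : kap0 a != 0.
Proof.
rewrite /kap0; apply/prodf_neq0 => l _.
case: ifP => [_|ne]; first by rewrite oner_eq0.
rewrite subr_eq0 /xi0 eqr_nat; apply: contraFN ne => /eqP E.
by apply/eqP/val_inj; rewrite /= E.
Qed.

Variable s : 'I_N -> 'rV[C]_n.

Lemma Mrows0 : Mrows (tensor_covec s) 0 =
  diag_mx (\row_i \prod_(a < N) kap0 a ^+ ((enum_val i : cfg N n) a)) *m
  \matrix_(i < #|cfg N n|) tensor_covec (fun b => s b *m K ^+ ((enum_val i : cfg N n) b)).
Proof.
transitivity (\matrix_(i < #|cfg N n|) ((\prod_(a < N) kap0 a ^+ ((enum_val i : cfg N n) a)) *: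
   tensor_covec (fun b => s b *m K ^+ ((enum_val i : cfg N n) b)))).
  apply/row_matrixP => i; rewrite !rowK.
  rewrite (eq_bigr (fun a => kap0 a ^+ ((enum_val i : cfg N n) a) *:
      Ksite K a ^+ ((enum_val i : cfg N n) a))); last by move=> a _; rewrite T2_0 exp_scale.
  by rewrite prod_scale -scalemxAr tens_prod_all.
by apply/matrixP => i j; rewrite mul_diag_mx !mxE.
Qed.

Lemma det_Mrows0 : (forall a, is_basis (fun h : 'I_n => s a *m K ^+ h)) ->
  \det (Mrows (tensor_covec s) 0) != 0.
Proof.
move=> Hb; rewrite Mrows0 det_mulmx det_diag mulf_neq0 //.
  apply/prodf_neq0 => i _; rewrite mxE; apply/prodf_neq0 => a _.
  by rewrite expf_neq0 // kap0_neq0.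
by rewrite -unitfE -unitmxE kron_unit.
Qed.

End Mn.

Section PolyFun.
Variable C : numClosedFieldType.
Variables (T A : Type) (ev : T -> A -> C) (addA mulA : A -> A -> A) (cst : C -> A).
Hypothesis evD : forall x p q, ev x (addA p q) = ev x p + ev x q.
Hypothesis evM : forall x p q, ev x (mulA p q) = ev x p * ev x q.
Hypothesis evC : forall x c, ev x (cst c) = c.

Definition ispoly (f : T -> C) := exists q, forall x, ev x q = f x.

Lemma ispoly_ext f g : ispoly f -> (forall x, f x = g x) -> ispoly g.
Proof. by move=> [q Hq] E; exists q => x; rewrite Hq E. Qed.

Lemma ispoly_cst c : ispoly (fun _ => c).
Proof. by exists (cst c). Qed.

Lemma ispoly_add f g : ispoly f -> ispoly g -> ispoly (fun x => f x + g x).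
Proof. by move=> [p Hp] [q Hq]; exists (addA p q) => x; rewrite evD Hp Hq. Qed.

Lemma ispoly_mul f g : ispoly f -> ispoly g -> ispoly (fun x => f x * g x).
Proof. by move=> [p Hp] [q Hq]; exists (mulA p q) => x; rewrite evM Hp Hq. Qed.

Lemma ispoly_opp f : ispoly f -> ispoly (fun x => - f x).
Proof.
move=> Hf; apply: (ispoly_ext (ispoly_mul (ispoly_cst (-1)) Hf)) => x.
by rewrite mulN1r.
Qed.

Lemma ispoly_sum (I : Type) (r : seq I) (P : pred I) (F : I -> T -> C) :
  (forall i, ispoly (F i)) -> ispoly (fun x => \sum_(i <- r | P i) F i x).
Proof.
move=> HF; elim: r => [|i r IH].
  by apply: (ispoly_ext (ispoly_cst 0)) => x; rewrite big_nil.
case Pi: (P i).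
  by apply: (ispoly_ext (ispoly_add (HF i) IH)) => x; rewrite big_cons Pi.
by apply: (ispoly_ext IH) => x; rewrite big_cons Pi.
Qed.

Lemma ispoly_prod (I : Type) (r : seq I) (F : I -> T -> C) :
  (forall i, ispoly (F i)) -> ispoly (fun x => \prod_(i <- r) F i x).
Proof.
move=> HF; elim: r => [|i r IH].
  by apply: (ispoly_ext (ispoly_cst 1)) => x; rewrite big_nil.
by apply: (ispoly_ext (ispoly_mul (HF i) IH)) => x; rewrite big_cons.
Qed.

Lemma ispoly_sum1 (I : Type) (r : seq I) (F : I -> T -> C) :
  (forall i, ispoly (F i)) -> ispoly (fun x => \sum_(i <- r) F i x).
Proof.
move=> HF; elim: r => [|i r IH].
  by apply: (ispoly_ext (ispoly_cst 0)) => x; rewrite big_nil.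
by apply: (ispoly_ext (ispoly_add (HF i) IH)) => x; rewrite big_cons.
Qed.

Lemma ispoly_exp f k : ispoly f -> ispoly (fun x => f x ^+ k).
Proof.
move=> Hf; elim: k => [|k IH].
  by apply: (ispoly_ext (ispoly_cst 1)) => x; rewrite expr0.
by apply: (ispoly_ext (ispoly_mul Hf IH)) => x; rewrite exprS.
Qed.

Definition ispolym m n (F : T -> 'M[C]_(m, n)) := forall i j, ispoly (fun x => F x i j).

Lemma ispolym_ext m n (F G : T -> 'M[C]_(m, n)) :
  ispolym F -> (forall x, F x = G x) -> ispolym G.
Proof. by move=> HF E i j; apply: (ispoly_ext (HF i j)) => x; rewrite E. Qed.

Lemma ispolym_cst m n (M : 'M[C]_(m, n)) : ispolym (fun _ => M).
Proof. by move=> i j; apply: ispoly_cst. Qed.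

Lemma ispolym_matrix m n (f : 'I_m -> 'I_n -> T -> C) :
  (forall i j, ispoly (f i j)) -> ispolym (fun x => \matrix_(i, j) f i j x).
Proof. by move=> Hf i j; apply: (ispoly_ext (Hf i j)) => x; rewrite mxE. Qed.

Lemma ispolym_add m n (F G : T -> 'M[C]_(m, n)) :
  ispolym F -> ispolym G -> ispolym (fun x => F x + G x).
Proof.
by move=> HF HG i j; apply: (ispoly_ext (ispoly_add (HF i j) (HG i j))) => x; rewrite mxE.
Qed.

Lemma ispolym_mul m n p (F : T -> 'M[C]_(m, n)) (G : T -> 'M[C]_(n, p)) :
  ispolym F -> ispolym G -> ispolym (fun x => F x *m G x).
Proof.
move=> HF HG i j.
have H : ispoly (fun x => \sum_(k <- index_enum 'I_n) F x i k * G x k j).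
  by apply: ispoly_sum1 => k; apply: ispoly_mul; [apply: HF | apply: HG].
apply: (ispoly_ext H) => x.
by rewrite mxE.


Qed.

Lemma ispolym_scale m n f (F : T -> 'M[C]_(m, n)) :
  ispoly f -> ispolym F -> ispolym (fun x => f x *: F x).
Proof.
by move=> Hf HF i j; apply: (ispoly_ext (ispoly_mul Hf (HF i j))) => x; rewrite mxE.
Qed.

Lemma ispolym_scalar n f : ispoly f -> ispolym (fun x => (f x)%:M : 'M[C]_n).
Proof.
move=> Hf i j; apply: (ispoly_ext (ispoly_mul Hf (ispoly_cst (i == j)%:R))) => x.
by rewrite mxE mulr_natr.
Qed.

Lemma ispolym_prod d (I : Type) (r : seq I) (F : I -> T -> 'M[C]_d) :
  (forall i, ispolym (F i)) -> ispolym (fun x => \prod_(i <- r) F i x).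
Proof.
move=> HF; elim: r => [|i r IH].
  by apply: (ispolym_ext (ispolym_cst 1)) => x; rewrite big_nil.
by apply: (ispolym_ext (ispolym_mul (HF i) IH)) => x; rewrite big_cons.
Qed.

Lemma ispolym_exp d (F : T -> 'M[C]_d) k : ispolym F -> ispolym (fun x => F x ^+ k).
Proof.
move=> HF; elim: k => [|k IH].
  by apply: (ispolym_ext (ispolym_cst 1)) => x; rewrite expr0.
by apply: (ispolym_ext (ispolym_mul HF IH)) => x; rewrite exprS.
Qed.

Lemma ispoly_det d (F : T -> 'M[C]_d) : ispolym F -> ispoly (fun x => \det (F x)).
Proof.
move=> HF; apply: ispoly_sum1 => s.
apply: ispoly_mul; first exact: ispoly_cst.
by apply: ispoly_prod => i; apply: HF.
Qed.


Lemma ispolym_rows m n (R : 'I_m -> T -> 'rV[C]_n) :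
  (forall i, ispolym (R i)) -> ispolym (fun x => \matrix_(i < m) R i x).
Proof. by move=> HR i j; apply: (ispoly_ext (HR i 0 j)) => x; rewrite mxE. Qed.

Lemma ispoly_ent (I : finType) (F : T -> op C I) a b :
  ispolym F -> ispoly (fun x => ent (F x) a b).
Proof. by move=> HF; apply: HF. Qed.

Lemma ispolym_mkop (I : finType) (f : T -> I -> I -> C) :
  (forall a b, ispoly (fun x => f x a b)) -> ispolym (fun x => mkop (f x)).
Proof. by move=> Hf i j; apply: (ispoly_ext (Hf (enum_val i) (enum_val j))) => x; rewrite mxE. Qed.

Lemma ispolym_rowfun n (f : 'I_n -> T -> C) :
  (forall j, ispoly (f j)) -> ispolym (fun x => \row_j f j x).
Proof. by move=> Hf i j; apply: (ispoly_ext (Hf j)) => x; rewrite mxE. Qed.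

Section Inst.
Variables (n N : nat) (K : 'M[C]_n).

Lemma ispolym_T2 (g : T -> C) (a : 'I_N) : ispoly g -> ispolym (fun x => T2 K a (g x)).
Proof.
move=> Hg; apply: ispolym_mkop => c c'; apply: ispoly_sum1 => i.
apply: ispoly_ent; apply: ispolym_mul; first exact: ispolym_cst.
apply: ispolym_prod => l; apply: ispolym_add; first exact: ispolym_cst.
apply: ispolym_scale; last exact: ispolym_cst.
by case: (rev_ord l == a); [apply: ispoly_cst | apply: Hg].
Qed.

Lemma ispolym_Mrows (g : T -> C) (S : 'rV[C]_#|cfg N n|) : ispoly g -> ispolym (fun x => Mrows K S (g x)).
Proof.
move=> Hg; apply: ispolym_rows => i; apply: ispolym_mul; first exact: ispolym_cst.
apply: ispolym_prod => a; apply: ispolym_exp; exact: ispolym_T2.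
Qed.

Lemma ispolym_hmat (xi : T -> 'I_N -> C) (S : T -> 'rV[C]_#|cfg N n|) :
  (forall l, ispoly (fun x => xi x l)) -> ispolym S ->
  ispolym (fun x => hmat K (xi x) (S x)).
Proof.
move=> Hxi HS; apply: ispolym_rows => i; apply: ispolym_mul => //.
apply: ispolym_prod => a; apply: ispolym_exp.
apply: ispolym_mkop => c c'; apply: ispoly_sum1 => k.
apply: ispoly_ent; apply: ispolym_mul; first exact: ispolym_cst.
apply: ispolym_prod => l; apply: ispolym_add; last exact: ispolym_cst.
apply: ispolym_scalar; apply: ispoly_add => //.
exact: ispoly_opp.
Qed.

End Inst.

End PolyFun.

Section Cyclic.
Variable C : numClosedFieldType.
Variable m : nat.
Local Notation n := m.+1.
Variable K : 'M[C]_n.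

Definition Kry (s : 'rV[C]_n) : 'M[C]_n := \matrix_(i < n) (s *m K ^+ i).

Lemma CH_sum : \sum_(i < n) (char_poly K)`_i *: K ^+ i + K ^+ n = 0.
Proof.
have CH := Cayley_Hamilton K.
rewrite -(coefK (char_poly K)) poly_def size_char_poly in CH.
rewrite linear_sum /= big_ord_recr /= in CH.
rewrite -[RHS]CH; congr (_ + _).
  by apply: eq_bigr => i _; rewrite horner_mxZ rmorphXn /= horner_mx_X.
have := char_poly_monic K; rewrite monicE /lead_coef size_char_poly => /eqP ->.
by rewrite horner_mxZ rmorphXn /= horner_mx_X scale1r.
Qed.

Lemma KexpD a b : K ^+ a *m K ^+ b = K ^+ (a + b).
Proof. by rewrite exprD. Qed.

Lemma KexpS a : K ^+ a *m K = K ^+ a.+1.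
Proof. by rewrite exprSr. Qed.

Lemma Kry_sub s i : (s *m K ^+ i <= Kry s)%MS.
Proof.
elim/ltn_ind: i => i IH.
case: (ltnP i n) => Hi.
  by apply: (eq_row_sub (Ordinal Hi)); rewrite rowK.
have -> : i = ((i - n) + n)%N by rewrite subnK.
rewrite exprD mulmxA.
have -> : K ^+ n = - \sum_(j < n) (char_poly K)`_j *: K ^+ j.
  by apply/eqP; rewrite -addr_eq0 addrC CH_sum.
rewrite mulmxN eqmx_opp mulmx_sumr summx_sub // => j _.
rewrite -scalemxAr scalemx_sub // -mulmxA KexpD IH //.
by rewrite -{2}(subnK Hi) ltn_add2l.
Qed.

Lemma Kry_stable s : (Kry s *m K <= Kry s)%MS.
Proof.
by apply/row_subP => i; rewrite row_mul rowK -mulmxA KexpS Kry_sub.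
Qed.

Lemma s_Kry s : (s <= Kry s)%MS.
Proof. by have := Kry_sub s 0; rewrite expr0 mulmx1. Qed.

Lemma Kry_min s (V : 'M[C]_n) : (s <= V)%MS -> (V *m K <= V)%MS -> (Kry s <= V)%MS.
Proof.
move=> sV VK; apply/row_subP => i; rewrite rowK.
elim: (nat_of_ord i) => [|k IH]; first by rewrite expr0 mulmx1.
rewrite -KexpS mulmxA; apply: submx_trans VK; exact: submxMr.
Qed.


Lemma rank_grow (W V : 'M[C]_n) (t' : 'rV[C]_n) :
  ~~ (t' <= W)%MS -> (W <= V)%MS -> (t' <= V)%MS -> (\rank W < \rank V)%N.
Proof.
move=> tW WV tV.
have : (W < V)%MS.
  rewrite ltmxE WV /=; apply: contra tW => VW; exact: submx_trans VW.
by rewrite ltmxErank => /andP[].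
Qed.

Lemma first_idx (W : 'M[C]_n) (rs : seq C) (t0 : 'rV[C]_n) :
  ~~ (t0 <= W)%MS -> (t0 *m \prod_(z <- rs) (K - z%:M) <= W)%MS ->
  exists a (t : 'rV[C]_n), ~~ (t <= W)%MS /\ (t *m (K - a%:M) <= W)%MS.
Proof.
elim: rs t0 => [|z rs IH] t0 Ht0.
  by rewrite big_nil -idmxE mulmx1 (negPf Ht0).
rewrite big_cons -mulmxE mulmxA => H.
have [Hz|Hz] := boolP (t0 *m (K - z%:M) <= W)%MS.
  by exists z, t0.
exact: IH Hz H.
Qed.

Lemma exists_quot_eig (W : 'M[C]_n) :
  (\rank W < n)%N ->
  exists a (t : 'rV[C]_n), ~~ (t <= W)%MS /\ (t *m (K - a%:M) <= W)%MS.
Proof.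
move=> HW.
have : ~~ (1%:M <= W)%MS by rewrite sub1mx /row_full ltn_eqF.
case/row_subPn => i Hi.
have [rs Hrs] := closed_field_poly_normal (char_poly K).
move: Hrs; rewrite (monicP (char_poly_monic K)) scale1r => Hrs.
apply: (first_idx (rs := rs) Hi).
have -> : \prod_(z <- rs) (K - z%:M) = horner_mx K (char_poly K).
  rewrite Hrs rmorph_prod; apply: eq_bigr => z _.
  by rewrite rmorphB /= horner_mx_X horner_mx_C.
by rewrite Cayley_Hamilton mulmx0 sub0mx.
Qed.


Lemma stable_sub (W : 'M[C]_n) a : (W *m K <= W)%MS -> (W *m (K - a%:M) <= W)%MS.
Proof.
move=> HW; rewrite mulmxBr addmx_sub // eqmx_opp mul_mx_scalar scalemx_sub //.
Qed.

Lemma Kry_dec s a : (Kry s <= Kry s *m (K - a%:M) + s)%MS.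
Proof.
apply/row_subP => i; rewrite rowK.
elim: (nat_of_ord i) => [|k IH]; first by rewrite expr0 mulmx1 addsmxSr.
have -> : s *m K ^+ k.+1 = s *m K ^+ k *m (K - a%:M) + a *: (s *m K ^+ k).
  by rewrite -KexpS mulmxA mulmxBr mul_mx_scalar subrK.
rewrite addmx_sub // ?scalemx_sub //.
apply: submx_trans (addsmxSl _ _); apply: submxMr; exact: Kry_sub.
Qed.

Lemma eig_pow (t : 'rV[C]_n) a k : t *m (K - a%:M) = 0 -> t *m K ^+ k = a ^+ k *: t.
Proof.
move=> H; have HK : t *m K = a *: t.
  by apply/eqP; rewrite -subr_eq0 -mul_mx_scalar -mulmxBr H.
elim: k => [|k IH]; first by rewrite expr0 mulmx1 scale1r.
by rewrite -KexpS mulmxA IH -scalemxAl HK scalerA exprSr.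
Qed.

Lemma Kry_step (Hw : forall a : C, (\rank (kermx (K - a%:M)) <= 1)%N) s :
  (\rank (Kry s) < n)%N -> exists s', (\rank (Kry s) < \rank (Kry s'))%N.
Proof.
set W := Kry s => HW.
have [a [t [tW tAW]]] := exists_quot_eig HW.
set A := K - a%:M in tAW *.
have WA : (W *m A <= W)%MS by apply: stable_sub; exact: Kry_stable.
have := submx_trans tAW (Kry_dec s a); rewrite -/A -/W.
case/sub_addsmxP => -[u v] /= Htu.
set x := u *m W.
have xW : (x <= W)%MS by apply: submxMl.
set t' := t - x.
have t'W : ~~ (t' <= W)%MS.
  apply: contra tW => H; have -> : t = t' + x by rewrite subrK.
  by rewrite addmx_sub.
have Ht' : t' *m A = v 0 0 *: s.
  by rewrite /t' mulmxBl Htu /x mulmxA addrC addKr {1}[v]mx11_scalar mul_scalar_mx.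
have [c0|cn0] := eqVneq (v 0 0) 0.
  rewrite c0 scale0r in Ht'.
  have [Hcap|Hcap] := eqVneq (W :&: kermx A)%MS 0.
    have Hr := mxrank_mul_ker W A.
    rewrite Hcap mxrank0 addn0 in Hr.
    have WWA : (W <= W *m A)%MS.
      by move: (mxrank_leqif_eq WA); rewrite Hr => /leqif_refl /andP[].
    exists (s + t').
    have E : Kry (s + t') *m A = W *m A.
      apply/row_matrixP => i; rewrite !row_mul !rowK.
      by rewrite mulmxDl (eig_pow _ Ht') mulmxDl -scalemxAl Ht' scaler0 addr0.
    have WK : (W <= Kry (s + t'))%MS.
      apply: submx_trans WWA _; rewrite -E; apply: stable_sub; exact: Kry_stable.
    apply: (rank_grow t'W WK).
    have H2 : ((s + t') - s <= Kry (s + t'))%MS.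
      by rewrite addmx_sub ?eqmx_opp ?s_Kry // (submx_trans (s_Kry s) WK).
    by rewrite addrC addKr in H2.
  case/rowV0Pn: Hcap => e; rewrite sub_capmx => /andP[eW eK] e0.
  have Hr1 := Hw a; rewrite -/A in Hr1.
  have re : \rank e = 1%N by rewrite rank_rV e0.
  have eeq : (e == kermx A)%MS.
    by move: (mxrank_leqif_eq eK) => /geq_leqif <-; rewrite re.

  have : (t' <= e)%MS.
    by rewrite (eqmxP eeq); apply/sub_kermxP.
  move/submx_trans => /(_ _ _ eW) H; by rewrite H in t'W.
set t'' := (v 0 0)^-1 *: t'.
exists t''.
have Ht'' : t'' *m A = s by rewrite -scalemxAl Ht' scalerA mulVf // scale1r.
have HsK : (s <= Kry t'')%MS.
  rewrite -Ht'' /A mulmxBr mul_mx_scalar addmx_sub //; last by rewrite eqmx_opp scalemx_sub // s_Kry.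
  apply: submx_trans (Kry_stable t''); apply: submxMr; exact: s_Kry.
have WK : (W <= Kry t'')%MS by exact: Kry_min HsK (Kry_stable _).
apply: (rank_grow (t' := t'') _ WK (s_Kry _)).
apply: contra t'W => H; have -> : t' = v 0 0 *: t'' by rewrite scalerA divff // scale1r.
by rewrite scalemx_sub.
Qed.


Lemma col_mul' p (A : 'M[C]_(p, n)) (B : 'M[C]_n) j : A *m col j B = col j (A *m B).
Proof. by apply/matrixP => i k; rewrite !mxE; apply: eq_bigr => l _; rewrite !mxE. Qed.

Lemma ws_ker (Hws : w_simple K) a : (\rank (kermx (K - a%:M)) <= 1)%N.
Proof.
rewrite mxrank_ker -mxrank_coker.
set Q := cokermx (K - a%:M).
have HQ j : K *m col j Q = a *: col j Q.
  apply/eqP; rewrite -subr_eq0 -mul_scalar_mx -mulmxBl col_mul' mulmx_coker.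
  by apply/eqP/matrixP => i k; rewrite !mxE.
have [j0 Hj0|Hall] := pickP (fun j => col j Q != 0).
  rewrite -mxrank_tr; apply: (leq_trans _ (rank_leq_row (col j0 Q)^T)).
  apply: mxrankS; apply/row_subP => j; rewrite -tr_col.
  have [c ->] := Hws a (col j0 Q) (col j Q) Hj0 (HQ j0) (HQ j).
  by rewrite linearZ /= scalemx_sub.
have -> : Q = 0.
  apply/matrixP => i j; have := Hall j; move/negbFE/eqP /matrixP /(_ i 0).
  by rewrite !mxE.
by rewrite mxrank0.
Qed.

Lemma Kry_full (Hws : w_simple K) : exists s, \rank (Kry s) = n.
Proof.
suff H : forall k, exists s, (minn k n <= \rank (Kry s))%N.
  have [s Hs] := H n; exists s; apply/eqP; rewrite eqn_leq rank_leq_row.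
  by rewrite minnn in Hs.
elim => [|k [s Hs]]; first by exists 0; rewrite min0n.
have [Hf|Hlt] := leqP n (\rank (Kry s)).
  by exists s; apply: leq_trans Hf; rewrite geq_minr.
have [s' Hs'] := Kry_step (ws_ker Hws) Hlt.
exists s'; lia.
Qed.


Lemma basis_of_Kry s : \rank (Kry s) = n -> is_basis (fun h : 'I_n => s *m K ^+ h).
Proof.
move=> Hr; rewrite /is_basis /row_free /row_full.
set M := \matrix_(i < #|'I_n|) _.
have HM : \rank M = n.
  apply/eqP; rewrite eqn_leq rank_leq_col -{1}Hr mxrankS //.
  apply/row_subP => i; rewrite rowK.
  by apply: (eq_row_sub (enum_rank i)); rewrite rowK enum_rankK.
by rewrite HM card_ord eqxx.
Qed.

End Cyclic.

Section Fin.
Variable C : numClosedFieldType.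

Let evP (u : C) (p : {poly C}) := p.[u].
Let evPD u p q : evP u (p + q) = evP u p + evP u q.
Proof. by rewrite /evP hornerD. Qed.
Let evPM u p q : evP u (p * q) = evP u p * evP u q.
Proof. by rewrite /evP hornerM. Qed.
Let evPC u c : evP u c%:P = c.
Proof. by rewrite /evP hornerC. Qed.

Lemma nonroot_nz (p : {poly C}) : p != 0 -> exists u, u != 0 /\ p.[u] != 0.
Proof.
move=> p0.
set rs := [seq (i.+1)%:R : C | i <- iota 0 (size p)].
have : ~~ all (root p) rs.
  apply/negP => Hall.
  have Hu : uniq rs.
    rewrite map_inj_uniq ?iota_uniq // => i j /eqP; rewrite eqr_nat => /eqP; case.
    done.
  by have := max_poly_roots p0 Hall Hu; rewrite size_map size_iota ltnn.
case/allPn => x /mapP [i _ ->] Hr; exists (i.+1)%:R; split; first by rewrite pnatr_eq0.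
exact: Hr.
Qed.

Variables (n N : nat) (K : 'M[C]_n).

Lemma good_xi (s : 'I_N -> 'rV[C]_n) :
  (forall a, is_basis (fun h : 'I_n => s a *m K ^+ h)) ->
  exists xi : 'I_N -> C, \det (hmat K xi (tensor_covec s)) != 0.
Proof.
move=> Hb.
have Hid : ispoly evP (fun u => u) by exists 'X => u; rewrite /evP hornerX.
have [p Hp] := ispoly_det evPD evPM evPC (ispolym_Mrows evPD evPM evPC K (tensor_covec s) Hid).
have p0 : p != 0.
  apply: contraNneq (det_Mrows0 Hb) => E; by rewrite -Hp E /evP horner0.
have [u [u0 pu]] := nonroot_nz p0.
exists (fun l => xi0 C l / u); apply: det_hmat => //.
by rewrite -Hp.
Qed.

End Fin.

Unset Implicit Arguments. Set Strict Implicit. Set Printing Implicit Defensive.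

Theorem proposition2p4 (C : numClosedFieldType) (n N : nat)
  (hn : (0 < n)%N) (hN : (0 < N)%N) (K : 'M[C]_n) :
  w_simple K ->
  (* for almost any (S, xi): outside the zero set of a nonzero polynomial *)
  (exists Q : {mpoly C[#|cfg N n| + N]}, Q != 0 /\
     forall (S : 'rV[C]_#|cfg N n|) (xi : 'I_N -> C),
       Q.@[join_pt S xi] != 0 -> is_basis (hvec K xi S)) /\
  (* such local cyclic covectors exist *)
  (exists s : 'rV[C]_n, is_basis (fun h : 'I_n => s *m K ^+ h)) /\
  (* for product covectors of local cyclic covectors, almost any xi works *)
  (forall s : 'I_N -> 'rV[C]_n,
     (forall a : 'I_N, is_basis (fun h : 'I_n => s a *m K ^+ h)) ->
     exists Q : {mpoly C[N]}, Q != 0 /\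
       forall xi : 'I_N -> C,
         Q.@[xi] != 0 -> is_basis (hvec K xi (tensor_covec s))).
Proof.
move=> Hws.
have P2 : exists s : 'rV[C]_n, is_basis (fun h : 'I_n => s *m K ^+ h).
  move: K Hws; case: n hn => // m _ K Hws.
  have [s Hs] := Kry_full Hws; exists s; exact: basis_of_Kry.
have P3 : forall s : 'I_N -> 'rV[C]_n,
     (forall a : 'I_N, is_basis (fun h : 'I_n => s a *m K ^+ h)) ->
     exists Q : {mpoly C[N]}, Q != 0 /\
       forall xi : 'I_N -> C,
         Q.@[xi] != 0 -> is_basis (hvec K xi (tensor_covec s)).
  move=> s Hb.
  pose ev := fun (x : 'I_N -> C) (p : {mpoly C[N]}) => p.@[x].
  have evD : forall x p q, ev x (p + q) = ev x p + ev x q by move=> *; exact: mevalD.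
  have evM : forall x p q, ev x (p * q) = ev x p * ev x q by move=> *; exact: mevalM.
  have evC : forall x c, ev x c%:MP = c by move=> *; exact: mevalC.
  have Hxi : forall l, ispoly ev (fun x => x l).
    by move=> l; exists 'X_l => x; rewrite /ev mevalXU.
  have [Q HQ] := ispoly_det evD evM evC
     (ispolym_hmat evD evM evC K Hxi (ispolym_cst evC (tensor_covec s))).
  exists Q; split.
    have [xi Hxi'] := good_xi Hb.
    apply: contraNneq Hxi' => E; by rewrite -HQ E /ev meval0.
  move=> xi Hq; apply: basis_hmat; by rewrite -HQ.
split; last by split.
have [s0 Hs0] := P2.
set d := #|cfg N n|.
pose ev := fun (x : 'I_(d + N) -> C) (p : {mpoly C[d + N]}) => p.@[x].
have evD : forall x p q, ev x (p + q) = ev x p + ev x q by move=> *; exact: mevalD.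
have evM : forall x p q, ev x (p * q) = ev x p * ev x q by move=> *; exact: mevalM.
have evC : forall x c, ev x c%:MP = c by move=> *; exact: mevalC.
pose xiF := fun (x : 'I_(d + N) -> C) (l : 'I_N) => x (rshift d l).
pose SF := fun (x : 'I_(d + N) -> C) => \row_(j < d) x (lshift N j).
have Hxi : forall l, ispoly ev (fun x => xiF x l).
  by move=> l; exists 'X_(rshift d l) => x; rewrite /ev mevalXU.
have HS : ispolym ev SF.
  apply: ispolym_rowfun => j.
  by exists 'X_(lshift N j) => x; rewrite /ev mevalXU.
have [Q HQ] := ispoly_det evD evM evC (ispolym_hmat evD evM evC K Hxi HS).
have Ej : forall S xi, xiF (join_pt S xi) = xi /\ SF (join_pt S xi) = S.
  move=> S xi; split.
    apply: functional_extensionality => l.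
    by rewrite /xiF /join_pt -[rshift d l]/(unsplit (inr l)) unsplitK.
  apply/matrixP => i j; rewrite [i]ord1 mxE.
  by rewrite /join_pt -[lshift N j]/(unsplit (inl j)) unsplitK.
exists Q; split.
  have [xi Hxi'] := @good_xi C n N K (fun _ => s0) (fun _ => Hs0).
  apply: contraNneq Hxi' => E.
  have := HQ (join_pt (tensor_covec (fun _ => s0)) xi).
  have [-> ->] := Ej (tensor_covec (fun _ => s0)) xi.
  by rewrite /ev E meval0 => <-.
move=> S xi Hq; apply: basis_hmat.
have := HQ (join_pt S xi); have [-> ->] := Ej S xi.
by move=> <-.
Qed.
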